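(* Let $\lambda\ge 1$ and let $A$ be an $m\times n$ rational matrix of full column rank. Consider the following procedure. Set $A^{(0)}=A$ and $\mathcal{B}=\emptyset$. For $k=1,\dots,n$: obtain a vector $b\in\operatorname{col}(A)\setminus\operatorname{span}(\mathcal{B})$ with $\|b\|_0\le\lambda\cdot\min\{\|a\|_0: a\in\operatorname{col}(A)\setminus\operatorname{span}(\mathcal{B})\}$, together with a column $a_j$ of $A^{(k-1)}$ that is not in $\mathcal{B}$ and such that replacing $a_j$ by $b$ preserves the column span; let $A^{(k)}$ be $A^{(k-1)}$ with $a_j$ replaced by $b$, and add $b$ to $\mathcal{B}$. Let $N$ be the matrix whose columns are the $n$ vectors in $\mathcal{B}$. Then $N=AX$ for some invertible $X$, and $\operatorname{nnz}(N)\le\lambda\cdot\min\{\operatorname{nnz}(AY): Y \text{ invertible}\}$; i.e. a $\lambda$-approximation oracle for sparsest independent vector yields a $\lambda$-approximation for matrix sparsification.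
   Context: $\|v\|_0$ is the number of nonzero entries of $v$, $\operatorname{nnz}(M)$ the number of nonzero entries of $M$, $\operatorname{col}(A)$ the column span, and $\operatorname{span}(\mathcal{B})$ the span of a set of vectors (the zero space if empty). Sparsest independent vector (SIV): given a full-column-rank matrix $A$ and a set $\mathcal{B}$ of columns of $A$, find $a\in\operatorname{col}(A)\setminus\operatorname{span}(\mathcal{B})$ minimizing $\|a\|_0$. *)

(* Defs.v *)
From HB Require Import structures.
From mathcomp Require Import all_boot all_order all_algebra.
Set Implicit Arguments. Unset Strict Implicit. Unset Printing Implicit Defensive.
Import Order.TTheory GRing.Theory Num.Theory.
Local Open Scope ring_scope.

Definition nnzv {F : fieldType} {m : nat} (v : 'cV[F]_m) : nat :=
  #|[set i : 'I_m | v i 0 != 0]|.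

Definition nnz {F : fieldType} {m n : nat} (M : 'M[F]_(m, n)) : nat :=
  #|[set ij : 'I_m * 'I_n | M ij.1 ij.2 != 0]|.

Definition in_col {F : fieldType} {m n : nat} (A : 'M[F]_(m, n)) (v : 'cV[F]_m) : Prop :=
  exists x : 'cV[F]_n, v = A *m x.

Definition in_span_prefix {F : fieldType} {m : nat} (b : nat -> 'cV[F]_m) (k : nat)
  (v : 'cV[F]_m) : Prop :=
  exists c : nat -> F, v = \sum_(1 <= i < k) c i *: b i.

Definition replace_col {F : fieldType} {m n : nat} (M : 'M[F]_(m, n)) (j : 'I_n)
  (v : 'cV[F]_m) : 'M[F]_(m, n) :=
  \matrix_(r < m, c < n) (if c == j then v r 0 else M r c).

Definition cols_mx {F : fieldType} {m : nat} (n : nat) (b : nat -> 'cV[F]_m) : 'M[F]_(m, n) :=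
  \matrix_(r < m, c < n) b c.+1 r 0.

(* The k-th step (1 <= k) of the procedure, with lambda-approximate SIV oracle output
   b k, chosen column index j k, and matrices Amat (k-1) -> Amat k. *)
Definition proc_step {R : realFieldType} {m n : nat} (A : 'M[rat]_(m, n)) (lam : R)
  (Amat : nat -> 'M[rat]_(m, n)) (b : nat -> 'cV[rat]_m) (j : nat -> 'I_n) (k : nat) : Prop :=
  [/\
      in_col A (b k) /\ ~ in_span_prefix b k (b k),
      (forall a, in_col A a -> ~ in_span_prefix b k a ->
         ((nnzv (b k))%:R <= lam * (nnzv a)%:R :> R)),
      (forall i, (1 <= i < k)%N -> col (j k) (Amat k.-1) != b i),
      (forall v, in_col (replace_col (Amat k.-1) (j k) (b k)) v <-> in_col (Amat k.-1) v)
    & Amat k = replace_col (Amat k.-1) (j k) (b k)].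

(* Main.v *)
Require Import Defs.
From HB Require Import structures.
From mathcomp Require Import all_boot all_order all_algebra.
Import Order.TTheory GRing.Theory Num.Theory.
Local Open Scope ring_scope.

Lemma card_sumb (T : finType) (P : pred T) : #|[set x | P x]| = (\sum_x (P x : nat))%N.
Proof. rewrite -sum1_card big_mkcond /=; apply: eq_bigr => x _; rewrite inE; by case: (P x). Qed.

Lemma nnz_cols (F : fieldType) m n (M : 'M[F]_(m, n)) : nnz M = (\sum_(j < n) nnzv (col j M))%N.
Proof.
rewrite /nnz /nnzv card_sumb.
rewrite -(pair_big xpredT xpredT (fun i j => (M i j != 0 : nat))) /= exchange_big /=.
apply: eq_bigr => j _; rewrite card_sumb; apply: eq_bigr => i _; by rewrite mxE.
Qed.

Lemma trmx_sumE (m n : nat) (I : Type) (r : seq I) (P : pred I) (E : I -> 'M[rat]_(m, n)) :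
  (\sum_(i <- r | P i) E i)^T = \sum_(i <- r | P i) (E i)^T.
Proof. exact: (raddf_sum (@trmx rat m n)). Qed.

Lemma trZ (m n : nat) (a : rat) (M : 'M[rat]_(m, n)) : (a *: M)^T = a *: M^T.
Proof. by apply/matrixP => i j; rewrite !mxE. Qed.

Lemma tr0 (m n : nat) : (0 : 'M[rat]_(m, n))^T = 0.
Proof. by apply/matrixP => i j; rewrite !mxE. Qed.

Lemma pid_mulE (m n : nat) r (M : 'M[rat]_(n, m)) i c :
  ((pid_mx r : 'M_n) *m M) i c = if (i < r)%N then M i c else 0.
Proof.
rewrite mxE (bigD1 i) //= big1 ?addr0.
  by rewrite mxE eqxx /=; case: (i < r)%N; rewrite ?mul1r ?mul0r.
move=> l nl; rewrite mxE. have -> : (i == l :> nat) = false by apply/negbTE; rewrite eq_sym.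
by rewrite mul0r.
Qed.

Definition Pm {m : nat} (n : nat) (b : nat -> 'cV[rat]_m) (k : nat) : 'M[rat]_(n, m) :=
  \matrix_(i < n, c < m) (if (i < k.-1)%N then b i.+1 c 0 else 0).

Lemma row_Pm m n (b : nat -> 'cV[rat]_m) k (i : 'I_n) :
  row i (Pm n b k) = if (i < k.-1)%N then (b i.+1)^T else 0.
Proof. apply/rowP => c; rewrite !mxE; case: (i < k.-1)%N; by rewrite ?mxE. Qed.

Lemma Pm_rank m n (b : nat -> 'cV[rat]_m) k : (k.-1 <= n)%N -> (\rank (Pm n b k) <= k.-1)%N.
Proof.
move=> hk.
have -> : Pm n b k = (pid_mx k.-1 : 'M_n) *m Pm n b k.
  apply/matrixP => i c; rewrite pid_mulE !mxE; by case: (i < k.-1)%N.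
apply: leq_trans (mxrankM_maxl _ _) _; by rewrite rank_pid_mx.
Qed.

Lemma sum_reidx {m} {n} {F : nat -> 'cV[rat]_m} {k} : (k.-1 <= n)%N ->
  \sum_(1 <= j < k) F j = \sum_(i < n | (i < k.-1)%N) F i.+1.
Proof. move=> hk. by rewrite big_add1 big_mkord (big_ord_widen _ (fun i => F i.+1) hk). Qed.

Lemma span_to_sub m n (b : nat -> 'cV[rat]_m) k v : (k.-1 <= n)%N ->
  in_span_prefix b k v -> (v^T <= Pm n b k)%MS.
Proof.
move=> hk [c ->]; rewrite (sum_reidx hk) trmx_sumE; apply: summx_sub => i hi.
rewrite trZ; apply: scalemx_sub.
have <- : row i (Pm n b k) = (b i.+1)^T by rewrite row_Pm hi.
exact: row_sub.
Qed.

Lemma sub_to_span m n (b : nat -> 'cV[rat]_m) k v : (k.-1 <= n)%N ->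
  (v^T <= Pm n b k)%MS -> in_span_prefix b k v.
Proof.
move=> hk /submxP [D hD].
exists (fun j => \sum_(i : 'I_n | (i.+1 == j)%N) D 0 i).
rewrite (sum_reidx hk) -[v]trmxK hD mulmx_sum_row trmx_sumE.
rewrite [RHS]big_mkcond /=; apply: eq_bigr => i _.
rewrite row_Pm; case: (i < k.-1)%N; last by rewrite scaler0 tr0.
rewrite trZ trmxK; congr (_ *: _).
by rewrite (big_pred1 i) // => l /=; rewrite eqSS.
Qed.

Lemma Pm_full m n (b : nat -> 'cV[rat]_m) :
  (forall k, (1 <= k <= n)%N -> ~ in_span_prefix b k (b k)) ->
  forall k, (k <= n)%N -> (k <= \rank (Pm n b k.+1))%N.
Proof.
move=> Hb; elim=> [|k IH] hk //.
have hk' : (k < n)%N by [].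
set A := Pm n b k.+1.
set v := (b k.+1)^T.
have nv : ~~ (v <= A)%MS.
  apply/negP => /(@sub_to_span m n b k.+1 (b k.+1) (ltnW hk')); apply: Hb; by rewrite /= hk'.
have sA : (A <= Pm n b k.+2)%MS.
  apply/row_subP => i; rewrite /A row_Pm /=.
  case: ifP => hi; last exact: sub0mx.
  have <- : row i (Pm n b k.+2) = (b i.+1)^T by rewrite row_Pm /= ltnS ltnW.
  exact: row_sub.
have sv : (v <= Pm n b k.+2)%MS.
  have <- : row (Ordinal hk') (Pm n b k.+2) = v by rewrite row_Pm /= ltnSn.
  exact: row_sub.
have lt : (A < A + v)%MS.
  rewrite ltmxE addsmxSl /=; apply/negP => h; move/negP: nv; apply.
  exact: submx_trans (addsmxSr _ _) h.
apply: leq_trans (mxrankS (_ : (A + v <= Pm n b k.+2)%MS)).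
  apply: leq_ltn_trans (IH (ltnW hk)) (rank_ltmx lt).
by rewrite addsmx_sub sA sv.
Qed.

Lemma colM_in (m n : nat) (A : 'M[rat]_(m, n)) (Y : 'M[rat]_n) i : in_col A (col i (A *m Y)).
Proof. exists (col i Y); by rewrite !colE mulmxA. Qed.

Theorem mainTheorem10 (R : realFieldType) (lam : R) (m n : nat) (A : 'M[rat]_(m, n))
  (Amat : nat -> 'M[rat]_(m, n)) (b : nat -> 'cV[rat]_m) (j : nat -> 'I_n) :
  1 <= lam ->
  \rank A = n ->
  Amat 0%N = A ->
  (forall k : nat, (1 <= k <= n)%N -> proc_step A lam Amat b j k) ->
  (exists2 X : 'M[rat]_n, X \in unitmx & cols_mx n b = A *m X) /\
  (forall Y : 'M[rat]_n, Y \in unitmx ->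
     (nnz (cols_mx n b))%:R <= lam * (nnz (A *m Y))%:R).
Proof.
move=> hlam rA _ H.
have Hcol : forall k, (1 <= k <= n)%N -> in_col A (b k).
  by move=> k hk; case: (H k hk) => [[]].
have Hns : forall k, (1 <= k <= n)%N -> ~ in_span_prefix b k (b k).
  by move=> k hk; case: (H k hk) => [[]].
have Hopt : forall k, (1 <= k <= n)%N -> forall a, in_col A a -> ~ in_span_prefix b k a ->
    ((nnzv (b k))%:R <= lam * (nnzv a)%:R :> R).
  by move=> k hk; case: (H k hk).
set N := cols_mx n b.
have rowN : forall i : 'I_n, row i N^T = (b i.+1)^T.
  by move=> i; apply/rowP => c; rewrite !mxE.
have PN : Pm n b n.+1 = N^T.
  by apply/matrixP => i c; rewrite !mxE /= ltn_ord.
have rN : \rank N = n.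
  apply/eqP; rewrite eqn_leq rank_leq_col /= -mxrank_tr -PN.
  exact: (@Pm_full m n b Hns n (leqnn n)).
split.
  have NA : (N^T <= A^T)%MS.
    apply/row_subP => i; rewrite rowN.
    have [x ->] := Hcol i.+1 (ltn_ord i).
    by rewrite trmx_mul submxMl.
  exists (N^T *m pinvmx A^T)^T; last first.
    by apply: trmx_inj; rewrite trmx_mul trmxK mulmxKpV.
  rewrite -row_free_unit /row_free; apply/eqP/anti_leq.
  rewrite rank_leq_row /= -{1}rN.
  have {1}-> : N = A *m (N^T *m pinvmx A^T)^T.
    by apply: trmx_inj; rewrite trmx_mul trmxK mulmxKpV.
  exact: mxrankM_maxr.
move=> Y uY.
set M := A *m Y.
set C := M^T.
have rC : \rank C = n by rewrite mxrank_tr mxrankMfree ?row_free_unit.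
set w := fun i : 'I_n => nnzv (col i M).
set beta := fun k => nnzv (b k).
have Elig : forall k, (1 <= k <= n)%N ->
    exists E : {set 'I_n}, (n <= k.-1 + #|E|)%N /\ (forall i, i \in E -> ((beta k)%:R <= lam * (w i)%:R :> R)).
  move=> k hk.
  have hk1 : (k.-1 <= n)%N by case/andP: hk => _ h; apply: leq_trans h; exact: leq_pred.
  exists [set i | ~~ (row i C <= Pm n b k)%MS]; split; last first.
    move=> i; rewrite inE => hi; apply: (Hopt k hk); first exact: colM_in.
    move=> /(@span_to_sub m n b k _ hk1); rewrite tr_col; exact/negP.
  set E := [set i | ~~ (row i C <= Pm n b k)%MS].
  set Er := \matrix_(r < #|E|) row (enum_val r) C.
  have sC : (C <= Pm n b k + Er)%MS.
    apply/row_subP => i; case: (boolP (i \in E)) => hi.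
      have <- : row (enum_rank_in hi i) Er = row i C by rewrite rowK enum_rankK_in.
      exact: submx_trans (row_sub _ _) (addsmxSr _ _).
    move: hi; rewrite inE negbK => hi.
    exact: submx_trans hi (addsmxSl _ _).
  rewrite -{1}rC; apply: leq_trans (mxrankS sC) _.
  apply: leq_trans (mxrank_adds_leqif _ _).1 _.
  by apply: leq_add; [exact: Pm_rank | exact: rank_leq_row].
have G : forall d, (d <= n)%N -> exists S : {set 'I_n}, (#|S| <= d)%N /\
    ((\sum_((n - d).+1 <= k < n.+1) beta k)%:R <= lam * (\sum_(i in S) w i)%:R :> R).
  elim=> [|d IH] hd.
    exists set0; split; first by rewrite cards0.
    by rewrite subn0 big_geq // big_set0 mulr0.
  have [S [cS hS]] := IH (ltnW hd).
  set p := (n - d.+1)%N.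
  have hp : (n - d = p.+1)%N by rewrite /p subnSK.
  have hpd : (p + d.+1 = n)%N by rewrite /p subnK.
  have hkk : (1 <= p.+1 <= n)%N by rewrite -hp subn_gt0 hd leq_subr.
  have [E [cE hE]] := Elig p.+1 hkk.
  have nsub : ~~ (E \subset S).
    apply/negP => /subset_leq_card hES.
    have : (n <= p + d)%N.
      apply: leq_trans cE _; rewrite /= leq_add2l; exact: leq_trans hES cS.
    by rewrite -{1}hpd addnS ltnn.
  have [i iE iS] := subsetPn nsub.
  exists (i |: S); split; first by rewrite cardsU1 iS.
  rewrite big_ltn; last by rewrite ltnS -hp leq_subr.
  rewrite big_setU1 // natrD natrD mulrDr; apply: lerD; first exact: hE.
  by rewrite -hp.
have [S [_ hS]] := G n (leqnn n).
rewrite subnn in hS.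
have colN : forall i : 'I_n, col i N = b i.+1.
  by move=> i; apply/matrixP => r c; rewrite !mxE (ord1 c).
rewrite !nnz_cols.
have -> : (\sum_(j0 < n) nnzv (col j0 N))%N = (\sum_(1 <= k < n.+1) beta k)%N.
  by rewrite big_add1 /= big_mkord; apply: eq_bigr => i _; rewrite colN.
apply: le_trans hS _.
apply: ler_wpM2l; first exact: le_trans ler01 hlam.
rewrite ler_nat [X in (_ <= X)%N]big_mkcond /= big_mkcond /=.
apply: leq_sum => i _; case: (i \in S) => //.
Qed.
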